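(* Even superfunctions $u=u(x\,|\,\nu,\tau)$ and $z=z(x\,|\,\nu,\tau)$ of one even variable $x$ and two odd variables $\nu,\tau$ satisfy the super Hilbert–Cartan equation $$z_x=\tfrac12u_{xx}^2+u_{x\nu}u_{x\tau},\quad z_\nu=u_{xx}u_{x\nu},\quad z_\tau=u_{xx}u_{x\tau},\quad u_{\nu\tau}=-u_{xx}$$ if and only if there exist constants $c_0,\dots,c_4\in\mathbb C$ such that $u=c_0+c_1x+\tfrac12c_2x^2+\tfrac16c_3x^3+(c_2+c_3x)\nu\tau$ and $z=c_4+\tfrac12c_2^2x+\tfrac12c_2c_3x^2+\tfrac16c_3^2x^3+c_3(c_2+c_3x)\nu\tau$.
   Context: Derivatives with respect to odd variables are left derivatives, $u_{x\nu}=\partial_\nu\partial_x u$ etc., and $u_{\nu\tau}$ denotes the second derivative of $u$ with respect to $\tau$ and $\nu$ (with the convention $u_{\nu\tau}=-u_{\tau\nu}$ for odd $\nu,\tau$). *)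

(* Defs.v *)
From mathcomp Require Import all_boot all_order all_algebra.
From mathcomp Require Import complex.
From mathcomp Require Import all_classical all_reals all_analysis.
Import GRing.Theory Num.Theory numFieldNormedType.Exports.

Set Implicit Arguments. Unset Strict Implicit. Unset Printing Implicit Defensive.
Local Open Scope ring_scope.

(* The complex numbers C = R[i] (R a real closed complete field), viewed as a
   numFieldType, hence as a normed module over itself: derivatives below are
   complex (holomorphic) derivatives. *)
Definition CC (R : realType) : numFieldType := R[i].

(* A superfunction of one even variable x and two odd variables nu, tau
   (generators of the Grassmann algebra, nu*tau = - tau*nu, nu^2 = tau^2 = 0):
     f = f0(x) + fnu(x) nu + ftau(x) tau + fnutau(x) nu tau.               *)
Record superfn (R : realType) := SFun {
  sf0 : CC R -> CC R ;
  sfnu : CC R -> CC R ;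
  sftau : CC R -> CC R ;
  sfnutau : CC R -> CC R }.

Section SuperOps.
Variable R : realType.
Implicit Types (f g : superfn R) (c : CC R).

Definition sadd f g : superfn R :=
  SFun (fun x => sf0 f x + sf0 g x) (fun x => sfnu f x + sfnu g x)
       (fun x => sftau f x + sftau g x) (fun x => sfnutau f x + sfnutau g x).

Definition sopp f : superfn R :=
  SFun (fun x => - sf0 f x) (fun x => - sfnu f x)
       (fun x => - sftau f x) (fun x => - sfnutau f x).

Definition smul f g : superfn R :=
  SFun (fun x => sf0 f x * sf0 g x)
       (fun x => sf0 f x * sfnu g x + sfnu f x * sf0 g x)
       (fun x => sf0 f x * sftau g x + sftau f x * sf0 g x)
       (fun x => sf0 f x * sfnutau g x + sfnutau f x * sf0 g x
                 + sfnu f x * sftau g x - sftau f x * sfnu g x).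

Definition sconst c : superfn R :=
  SFun (fun _ => c) (fun _ => 0) (fun _ => 0) (fun _ => 0).

Definition sX : superfn R := SFun id (fun _ => 0) (fun _ => 0) (fun _ => 0).
Definition snu : superfn R := SFun (fun _ => 0) (fun _ => 1) (fun _ => 0) (fun _ => 0).
Definition stau : superfn R := SFun (fun _ => 0) (fun _ => 0) (fun _ => 1) (fun _ => 0).

Definition dx f : superfn R :=
  SFun (derive1 (sf0 f)) (derive1 (sfnu f)) (derive1 (sftau f))
       (derive1 (sfnutau f)).

(* left derivatives in the odd variables:
   d_nu (nu) = 1, d_nu (tau) = 0, d_nu (nu tau) = tau;
   d_tau (nu) = 0, d_tau (tau) = 1, d_tau (nu tau) = - nu. *)
Definition dnu f : superfn R :=
  SFun (sfnu f) (fun _ => 0) (sfnutau f) (fun _ => 0).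
Definition dtau f : superfn R :=
  SFun (sftau f) (fun x => - sfnutau f x) (fun _ => 0) (fun _ => 0).

Definition smoothC (h : CC R -> CC R) : Prop :=
  forall (n : nat) (x : CC R), derivable (derive1n n h) x 1.

Definition superfunction f : Prop :=
  [/\ smoothC (sf0 f), smoothC (sfnu f), smoothC (sftau f) & smoothC (sfnutau f)].

Definition even_sf f : Prop := sfnu f = (fun _ => 0) /\ sftau f = (fun _ => 0).

End SuperOps.

Declare Scope sfun_scope.
Delimit Scope sfun_scope with SF.
Notation "f + g" := (sadd f g) : sfun_scope.
Notation "f * g" := (smul f g) : sfun_scope.
Notation "- f" := (sopp f) : sfun_scope.
Notation "c %:S" := (sconst c) (at level 2, format "c %:S") : sfun_scope.
Arguments sX {R}.
Arguments snu {R}.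
Arguments stau {R}.

(* Main.v *)
Require Import Defs.
From mathcomp Require Import all_boot all_order all_algebra.
From mathcomp Require Import complex.
From mathcomp Require Import all_classical all_reals all_analysis.
From mathcomp Require Import ring lra.
Import Order.TTheory GRing.Theory Num.Theory numFieldNormedType.Exports.
Local Open Scope ring_scope.
Local Open Scope complex_scope.
Local Open Scope classical_set_scope.

Section S.
Variable R : realType.
Local Notation C := (CC R).

Lemma normCR (s : R) : `|(s%:C : C)| = (`|s|)%:C.
Proof. by rewrite normc_def /= expr0n addr0 sqrtr_sqr. Qed.

Lemma normRe (z : C) : (`|complex.Re z|)%:C <= `|z|.
Proof.
rewrite normc_def lecR -sqrtr_sqr ler_sqrt ?lerDl ?sqr_ge0 ?addr_ge0 ?sqr_ge0 //.
Qed.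

Lemma deriv0_small (h : C -> C) x : derivable h x 1 -> derive1 h x = 0 ->
  forall e : R, 0 < e -> exists2 d : R, 0 < d &
   forall t : C, `|t| < d%:C -> `|h (x + t) - h x| <= e%:C * `|t|.
Proof.
move=> dh d0 e e0.
have : (fun t : C => t^-1 *: ((h \o shift x) (t *: 1) - h x)) @ (0:C)^' --> (0:C).
  have L : derive h x 1 = 0 by rewrite -derive1E.
  rewrite /derive in L; move: dh; rewrite /derivable L; exact.
move/cvgr0Pnorm_lt => /(_ e%:C).
rewrite ltcR => /(_ e0).
rewrite near_withinE => /nbhs_norm0P [d /= d0' Hd].
case: d d0' Hd => a b; rewrite ltcE /= => /andP[/eqP b0 a0]; subst b => Hd.
exists a => // t ta.
have [->|tn0] := eqVneq t 0.
  by rewrite addr0 subrr normr0 mulr0.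
have := Hd t ta tn0.
have -> : t%:A = t by rewrite /GRing.scale /= mulr1.
rewrite normrZ normfV addrC => H; apply: ltW.
move: H; rewrite mulrC ltr_pdivrMr ?normr_gt0 //.
by rewrite [x + t]addrC [h _ - _]addrC.
Qed.

Lemma normC_real (w : C) : `|w| = (complex.Re `|w|)%:C.
Proof. by rewrite normc_def. Qed.

Lemma proj_deriv0 (P : C -> R) (Padd : forall z1 z2, P z1 - P z2 = P (z1 - z2))
  (Pn : forall z, (`|P z|)%:C <= `|z|)
  (h : C -> C) (a w : C) (hd : forall x, derivable h x 1) (h0 : forall x, derive1 h x = 0)
  (t : R) : is_derive t 1 (fun s : R => P (h (a + s%:C * w))) 0.
Proof.
set W := complex.Re `|w|.
have W0 : 0 <= W by rewrite /W; case: (normr_ge0 w); rewrite normc_def /= lecE /= => /andP[].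
have E : forall e, 0 < e -> \forall s \near (0:R)^', `|s^-1 *: (P (h (a + (s *: 1 + t)%:C * w)) - P (h (a + t%:C * w))) | < e.
  move=> e e0.
  have e'0 : 0 < e / (W + 1) by rewrite divr_gt0 // ltr_wpDl.
  have [d d0 Hd] := @deriv0_small h (a + t%:C * w) (hd _) (h0 _) _ e'0.
  near=> s.
  have sn0 : s != 0 by near: s; exact: nbhs_dnbhs_neq.
  have sd : `|s| < d / (W + 1).
    by near: s; apply: dnbhs0_lt; rewrite divr_gt0 // ltr_wpDl.
  have -> : s%:A = s by rewrite /GRing.scale /= mulr1.
  have sp : 0 < `|s| by rewrite normr_gt0.
  have W1 : 0 < W + 1 by rewrite ltr_wpDl.
  have Ew : `|s%:C * w| = (`|s| * W)%:C by rewrite normrM normCR [`|w|]normC_real rmorphM.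
  have sWd : `|s| * W < d.
    move: sd; rewrite ltr_pdivlMr // => sd; apply: le_lt_trans sd.
    by rewrite ler_wpM2l ?normr_ge0 // lerDl.
  have := Hd (s%:C * w); rewrite Ew ltcR => /(_ sWd).
  rewrite rmorphD /= mulrDl addrA Padd => H.
  have B : `|P (h (a + t%:C * w + s%:C * w) - h (a + t%:C * w))| <= e / (W + 1) * (`|s| * W).
    by rewrite -lecR rmorphM /=; apply: le_trans (Pn _) (le_trans H _).
  rewrite normrZ normfV.
  rewrite mulrC ltr_pdivrMr // [a + s%:C * w + _]addrAC (le_lt_trans B) //.
  have -> : e / (W + 1) * (`|s| * W) = e * `|s| * (W / (W+1)).
    by rewrite -!mulrA; congr (_ * _); rewrite mulrCA [W * _]mulrC.
  rewrite -[ltRHS]mulr1 ltr_pM2l ?mulr_gt0 // ltr_pdivrMr // mul1r ltrDl ltr01 //.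
have C0 : (fun s : R => s^-1 *: (P (h (a + (s *: 1 + t)%:C * w)) - P (h (a + t%:C * w)))) @ (0:R)^' --> (0:R).
  by apply/cvgr0Pnorm_lt.
apply: DeriveDef; first exact: (cvgP _ C0).
exact: (cvg_lim _ C0).
Unshelve. all: by end_near.
Qed.

Lemma normIm (z : C) : (`|complex.Im z|)%:C <= `|z|.
Proof.
rewrite normc_def lecR -sqrtr_sqr ler_sqrt ?lerDr ?sqr_ge0 ?addr_ge0 ?sqr_ge0 //.
Qed.

Lemma ReB (z1 z2 : C) : complex.Re z1 - complex.Re z2 = complex.Re (z1 - z2).
Proof. by case: z1 z2 => ? ? [? ?]. Qed.
Lemma ImB (z1 z2 : C) : complex.Im z1 - complex.Im z2 = complex.Im (z1 - z2).
Proof. by case: z1 z2 => ? ? [? ?]. Qed.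

Lemma C_cst (h : C -> C) : (forall x, derivable h x 1) -> (forall x, derive1 h x = 0) ->
  forall a b, h a = h b.
Proof.
move=> hd h0 a b.
have Re_eq := is_derive_0_is_cst 0 1 (@proj_deriv0 (@complex.Re R) ReB normRe h a (b - a) hd h0).
have Im_eq := is_derive_0_is_cst 0 1 (@proj_deriv0 (@complex.Im R) ImB normIm h a (b - a) hd h0).
have E0 : a + 0%:C * (b - a) = a by rewrite mul0r addr0.
have E1 : a + 1%:C * (b - a) = b by rewrite mul1r addrC subrK.
move: Re_eq Im_eq; rewrite E0 E1.
by case: (h a) => ? ?; case: (h b) => ? ? /= -> ->.
Qed.

Lemma horner0_extC : horner (0 : {poly C}) = 0.
Proof. by apply/funext => y /=; rewrite horner0. Qed.

Lemma hornerD_extC (p : {poly C}) r :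
  horner (p * 'X + r%:P) = horner (p * 'X) + horner (r%:P).
Proof. by apply/funext => y /=; rewrite !(hornerE,fctE). Qed.

Lemma horner_scale_extC (p : {poly C}) :
  horner (p * 'X) = (fun x => p.[x] * x)%R.
Proof. by apply/funext => y; rewrite !hornerE. Qed.

Lemma hornerC_extC (r : C) : horner r%:P = cst r.
Proof. by apply/funext => y /=; rewrite !hornerE. Qed.

Lemma derivable_hornerC (p : {poly C}) x : derivable (horner p) x 1.
Proof.
elim/poly_ind: p => [|p r ih]; first by rewrite horner0_extC.
rewrite hornerD_extC; apply: derivableD.
- rewrite horner_scale_extC/=.
  by apply: derivableM; [exact:ih|exact:derivable_id].
- by rewrite hornerC_extC; exact: derivable_cst.
Qed.

Lemma derivEC (p : {poly C}) : horner (p^`()) = (horner p)^`()%classic.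
Proof.
apply/funext => x; elim/poly_ind: p => [|p r ih].
  by rewrite deriv0 hornerC horner0_extC derive1_cst.
rewrite derivD hornerD hornerD_extC.
rewrite derive1E deriveD//; [|exact: derivable_hornerC..].
rewrite -!derive1E hornerC_extC derive1_cst addr0.
rewrite horner_scale_extC derive1E deriveM//; last exact: derivable_hornerC.
rewrite derive_id -derive1E -ih derivC horner0 addr0 derivM hornerD !hornerE.
by rewrite derivX hornerE mulr1 addrC mulrC scaler1.
Qed.

Lemma poly_derivable (f : C -> C) (P : {poly C}) : (forall x, f x = P.[x]) ->
  forall x, derivable f x 1.
Proof. by move=> fP x; rewrite (_ : f = horner P); [exact: derivable_hornerC|apply/funext]. Qed.

Lemma poly_derive1 (f : C -> C) (P : {poly C}) : (forall x, f x = P.[x]) ->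
  derive1 f = horner P^`().
Proof. by move=> fP; rewrite (_ : f = horner P) ?derivEC //; apply/funext. Qed.

Lemma eq_by_deriv (f G : C -> C) : (forall x, derivable f x 1) -> (forall x, derivable G x 1) ->
  (forall x, derive1 f x = derive1 G x) -> forall x, f x = G x + (f 0 - G 0).
Proof.
move=> fd Gd fG x.
have := @C_cst (f - G) (fun x => derivableB (fd x) (Gd x)) _ x 0.
move=> H; rewrite -[_ - G 0]H ?[_ - _ 0]/(f x - G x); first by rewrite addrC subrK.
by move=> y; rewrite derive1E deriveB // -!derive1E fG subrr.
Qed.
End S.
Lemma integ (R : realType) (f : CC R -> CC R) (Gp : {poly CC R}) : (forall x, derivable f x 1) ->
  (forall x, derive1 f x = (Gp^`()).[x]) -> forall x, f x = Gp.[x] + (f 0 - Gp.[0]).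
Proof.
move=> fd fG; apply: (@eq_by_deriv R f (horner Gp) fd (@derivable_hornerC R Gp)).
by move=> x; rewrite -derivEC.
Qed.

Ltac hE := rewrite ?(hornerD, hornerN, hornerX, hornerC, hornerXn, hornerZ, hornerM, hornerMn, horner_exp, horner0).
Ltac dE := rewrite ?(derivD, derivN, derivB, derivZ, derivC, derivX, derivXn, derivM, derivMn, deriv0).


Definition cub (R : realType) (k0 k1 k2 k3 : CC R) : CC R -> CC R :=
  fun x => k0 + k1 * x + k2 * x ^+ 2 + k3 * x ^+ 3.

Arguments cub {R}.

Lemma d_cub (R : realType) (k0 k1 k2 k3 : CC R) :
  derive1 (cub k0 k1 k2 k3) = cub k1 (2 * k2) (3 * k3) 0.
Proof.
rewrite (@poly_derive1 R _ (k0%:P + k1 *: 'X + k2 *: 'X^2 + k3 *: 'X^3)).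
  by apply/funext => x; dE; hE; rewrite /cub; ring.
by move=> x; hE; rewrite /cub.
Qed.

Lemma D0 (R : realType) : derive1 (fun _ : CC R => (0 : CC R)) = (fun _ => 0).
Proof. by apply/funext => x; rewrite derive1_cst. Qed.

Lemma sformU (R : realType) (c0 c1 c2 c3 : CC R) :
  (c0%:S + c1%:S * sX + (2^-1 * c2)%:S * (sX * sX)
           + (6^-1 * c3)%:S * (sX * sX * sX)
           + (c2%:S + c3%:S * sX) * snu * stau)%SF =
  SFun (cub c0 c1 (2^-1 * c2) (6^-1 * c3)) (fun _ => 0) (fun _ => 0) (cub c2 c3 0 0).
Proof. congr SFun; apply/funext => x /=; rewrite /cub; ring. Qed.

Lemma sformZ (R : realType) (c2 c3 c4 : CC R) :
  (c4%:S + (2^-1 * c2 ^+ 2)%:S * sX + (2^-1 * c2 * c3)%:S * (sX * sX)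
           + (6^-1 * c3 ^+ 2)%:S * (sX * sX * sX)
           + c3%:S * (c2%:S + c3%:S * sX) * snu * stau)%SF =
  SFun (cub c4 (2^-1 * c2 ^+ 2) (2^-1 * c2 * c3) (6^-1 * c3 ^+ 2)) (fun _ => 0) (fun _ => 0)
    (cub (c3 * c2) (c3 ^+ 2) 0 0).
Proof. congr SFun; apply/funext => x /=; rewrite /cub; ring. Qed.

Lemma backward (R : realType) (c0 c1 c2 c3 c4 : CC R) :
  let u := SFun (cub c0 c1 (2^-1 * c2) (6^-1 * c3)) (fun _ => 0) (fun _ => 0) (cub c2 c3 0 0) in
  let z := SFun (cub c4 (2^-1 * c2 ^+ 2) (2^-1 * c2 * c3) (6^-1 * c3 ^+ 2)) (fun _ => 0) (fun _ => 0)
    (cub (c3 * c2) (c3 ^+ 2) 0 0) in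
  [/\ dx z = ((2^-1)%:S * (dx (dx u) * dx (dx u)) + dnu (dx u) * dtau (dx u))%SF,
        dnu z = (dx (dx u) * dnu (dx u))%SF,
        dtau z = (dx (dx u) * dtau (dx u))%SF &
        dnu (dtau u) = (- dx (dx u))%SF ].
Proof.
move=> u z; rewrite /u /z /dx /= ?d_cub ?D0 /= ?d_cub ?D0.
Time split; congr SFun; apply/funext => x /=; rewrite /cub; by field.
Qed.

Local Close Scope classical_set_scope.
Local Close Scope complex_scope.
Theorem proposition5p8 (R : realType) (u z : superfn R) :
  superfunction u -> superfunction z -> even_sf u -> even_sf z ->
  ( [/\ dx z = ((2^-1)%:S * (dx (dx u) * dx (dx u)) + dnu (dx u) * dtau (dx u))%SF,
        dnu z = (dx (dx u) * dnu (dx u))%SF,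
        dtau z = (dx (dx u) * dtau (dx u))%SF &
        dnu (dtau u) = (- dx (dx u))%SF ]
  <->
    exists c0 c1 c2 c3 c4 : CC R,
      u = (c0%:S + c1%:S * sX + (2^-1 * c2)%:S * (sX * sX)
           + (6^-1 * c3)%:S * (sX * sX * sX)
           + (c2%:S + c3%:S * sX) * snu * stau)%SF
      /\
      z = (c4%:S + (2^-1 * c2 ^+ 2)%:S * sX + (2^-1 * c2 * c3)%:S * (sX * sX)
           + (6^-1 * c3 ^+ 2)%:S * (sX * sX * sX)
           + c3%:S * (c2%:S + c3%:S * sX) * snu * stau)%SF ).
Proof.
case: u => a unu utau b; case: z => p znu ztau q.
move=> [sa _ _ sb] [sp _ _ sq] [/= En Et] [/= Zn Zt]; subst unu utau znu ztau.
have D0' : derive1 (fun _ : CC R => (0 : CC R)) = (fun _ => 0).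
  by apply/funext => x; rewrite derive1_cst.
split.
- case=> E1 E2 E3 E4.
  have e4a := congr1 (@sf0 R) E4; have e4b := congr1 (@sfnutau R) E4.
  have e2 := congr1 (@sftau R) E2; have e1 := congr1 (@sf0 R) E1.
  rewrite /= ?D0' in e4a e4b e2 e1.
  have hb x : b x = derive1 (derive1 a) x by apply: oppr_inj; exact: (congr1 (fun f => f x) e4a).
  have hb2 x : derive1 (derive1 b) x = 0.
    by have := congr1 (fun f => f x) e4b => /= /esym /eqP; rewrite oppr_eq0 => /eqP.
  have hq x : q x = derive1 (derive1 a) x * derive1 b x by rewrite e2 mulr0 addr0.
  have hp x : derive1 p x = 2^-1 * (derive1 (derive1 a) x * derive1 (derive1 a) x) by rewrite e1 mulr0 addr0.
  have db1 x : derivable (derive1 b) x 1 by exact: (sb 1%N x).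
  have db0 x : derivable b x 1 by exact: (sb 0%N x).
  have da1 x : derivable (derive1 a) x 1 by exact: (sa 1%N x).
  have da0 x : derivable a x 1 by exact: (sa 0%N x).
  have dp0 x : derivable p x 1 by exact: (sp 0%N x).
  set c3 := derive1 b 0.
  have Hb' x : derive1 b x = c3 by exact: (@C_cst _ (derive1 b) db1 hb2 x 0).
  set c2 := b 0.
  have Hb x : b x = c2 + c3 * x.
    have P : forall x, c3 * x = (c3 *: 'X : {poly CC R}).[x] by move=> y; rewrite !hornerE.
    rewrite (@integ R b (c3 *: 'X) db0); first by hE; rewrite /c2; ring.
    by move=> y; rewrite Hb'; dE; hE; ring.
  set c1 := derive1 a 0.
  have Ha' x : derive1 a x = c1 + c2 * x + 2^-1 * c3 * x ^+ 2.
    rewrite (@integ R (derive1 a) (c2 *: 'X + (2^-1 * c3) *: 'X^2) da1); first by hE; rewrite /c1; ring.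
    move=> y; rewrite -hb Hb ; dE; hE.
    by field.
  set c0 := a 0.
  have Ha x : a x = c0 + c1 * x + 2^-1 * c2 * x ^+ 2 + 6^-1 * c3 * x ^+ 3.
    rewrite (@integ R a (c1 *: 'X + (2^-1 * c2) *: 'X^2 + (6^-1 * c3) *: 'X^3) da0); first by hE; rewrite /c0; ring.
    by move=> y; rewrite Ha'; dE; hE; field.
  set c4 := p 0.
  have Hp x : p x = c4 + 2^-1 * c2 ^+ 2 * x + 2^-1 * c2 * c3 * x ^+ 2 + 6^-1 * c3 ^+ 2 * x ^+ 3.
    rewrite (@integ R p ((2^-1 * c2 ^+ 2) *: 'X + (2^-1 * c2 * c3) *: 'X^2 + (6^-1 * c3 ^+ 2) *: 'X^3) dp0); first by hE; rewrite /c4; ring.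
    by move=> y; rewrite hp -hb Hb; dE; hE; field.
  have Hq x : q x = c3 * (c2 + c3 * x).
    by rewrite hq -hb Hb Hb' mulrC.
  exists c0, c1, c2, c3, c4; rewrite sformU sformZ; split; congr SFun; apply/funext => x;
    rewrite /cub ?Ha ?Hb ?Hp ?Hq; ring.
- case=> [c0 [c1 [c2 [c3 [c4 [Eu Ez]]]]]].
  rewrite sformU in Eu; rewrite sformZ in Ez.
  case: Eu => -> ->; case: Ez => -> ->; exact: backward.
Qed.
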